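(* Let $\mathbb{K}\in\{\mathbb{R},\mathbb{C}\}$, $\mathbf{R}_U\in\mathbb{K}^{n\times n}$ self-adjoint positive definite, $U:=\mathbb{K}^n$ with $\langle\mathbf{x},\mathbf{y}\rangle_U:=\langle\mathbf{R}_U\mathbf{x},\mathbf{y}\rangle$, norm $\|\cdot\|_U$, dual norm $\|\mathbf{y}\|_{U'}:=\langle\mathbf{y},\mathbf{R}_U^{-1}\mathbf{y}\rangle^{1/2}$. Fix $\mu$, an invertible $\mathbf{A}(\mu)\in\mathbb{K}^{n\times n}$, $\mathbf{b}(\mu),\mathbf{l}(\mu)\in\mathbb{K}^n$, $\mathbf{u}(\mu):=\mathbf{A}(\mu)^{-1}\mathbf{b}(\mu)$, $s(\mu):=\langle\mathbf{l}(\mu),\mathbf{u}(\mu)\rangle$, and arbitrary vectors $\mathbf{u}_r(\mu),\mathbf{u}_r^{\mathrm{du}}(\mu)\in U$. Let $\mathbf{r}(\mathbf{x};\mu):=\mathbf{b}(\mu)-\mathbf{A}(\mu)\mathbf{x}$, $\mathbf{r}^{\mathrm{du}}(\mathbf{x};\mu):=-\mathbf{l}(\mu)-\mathbf{A}(\mu)^{\mathrm{H}}\mathbf{x}$, $s_r(\mu):=\langle\mathbf{l}(\mu),\mathbf{u}_r(\mu)\rangle$, let $\mathbf{\Theta}\in\mathbb{K}^{k\times n}$ and $$s_r^{\mathrm{spd}}(\mu):=s_r(\mu)-\langle\mathbf{\Theta}\mathbf{u}_r^{\mathrm{du}}(\mu),\mathbf{\Theta}\mathbf{R}_U^{-1}\mathbf{r}(\mathbf{u}_r(\mu);\mu)\rangle.$$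 Let $\eta(\mu)>0$ satisfy $\eta(\mu)\le\min_{\mathbf{x}\in U\setminus\{\mathbf{0}\}}\|\mathbf{A}(\mu)\mathbf{x}\|_{U'}/\|\mathbf{x}\|_U$. If for some $\varepsilon\in[0,1)$, $|\langle\mathbf{x},\mathbf{y}\rangle_U-\langle\mathbf{\Theta}\mathbf{x},\mathbf{\Theta}\mathbf{y}\rangle|\le\varepsilon\|\mathbf{x}\|_U\|\mathbf{y}\|_U$ for all $\mathbf{x},\mathbf{y}\in\mathrm{span}\{\mathbf{u}_r^{\mathrm{du}}(\mu),\mathbf{R}_U^{-1}\mathbf{r}(\mathbf{u}_r(\mu);\mu)\}$, then $$|s(\mu)-s_r^{\mathrm{spd}}(\mu)|\le\frac{\|\mathbf{r}(\mathbf{u}_r(\mu);\mu)\|_{U'}}{\eta(\mu)}\Big((1+\varepsilon)\|\mathbf{r}^{\mathrm{du}}(\mathbf{u}_r^{\mathrm{du}}(\mu);\mu)\|_{U'}+\varepsilon\|\mathbf{l}(\mu)\|_{U'}\Big).$$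
   Context: $\langle\mathbf{x},\mathbf{y}\rangle=\mathbf{x}^{\mathrm{H}}\mathbf{y}$ is the canonical inner product; $\mathbf{M}^{\mathrm{H}}$ is the (conjugate) transpose. *)

(* Defs.v *)
(* The scalar field K is modelled inside an arbitrary
   numClosedFieldType C (e.g. C = complex R for R : realType, giving K = C,
   or the real subfield of C, giving K = R).  The boolean [realK] selects
   K = real elements of C (realK = true) or K = C (realK = false). *)
From HB Require Import structures.
From mathcomp Require Import all_boot all_order all_algebra.
Set Implicit Arguments. Unset Strict Implicit. Unset Printing Implicit Defensive.
Import Order.TTheory GRing.Theory Num.Theory.
Local Open Scope ring_scope.

Section Defs.
Variable C : numClosedFieldType.

Definition inK (realK : bool) (c : C) : bool := realK ==> (c \is Num.real).

Definition mxInK (realK : bool) m p (M : 'M[C]_(m, p)) : Prop :=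
  forall i j, inK realK (M i j).

Definition dotp n (x y : 'cV[C]_n) : C := \sum_(i < n) (x i 0)^* * y i 0.

Definition adjmx m p (M : 'M[C]_(m, p)) : 'M[C]_(p, m) := map_mx Num.conj M^T.

Definition selfadjoint n (M : 'M[C]_n) : Prop := adjmx M = M.

Definition posdef (realK : bool) n (M : 'M[C]_n) : Prop :=
  forall x : 'cV[C]_n, mxInK realK x -> x != 0 -> 0 < dotp (M *m x) x.

Definition dotU n (RU : 'M[C]_n) (x y : 'cV[C]_n) : C := dotp (RU *m x) y.
Definition normU n (RU : 'M[C]_n) (x : 'cV[C]_n) : C := sqrtC (dotU RU x x).
Definition normUd n (RU : 'M[C]_n) (y : 'cV[C]_n) : C :=
  sqrtC (dotp y (invmx RU *m y)).

Definition inspan2 (realK : bool) n (v w x : 'cV[C]_n) : Prop :=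
  exists a b, [/\ inK realK a, inK realK b & x = a *: v + b *: w].

Definition resid n (A : 'M[C]_n) (b x : 'cV[C]_n) : 'cV[C]_n := b - A *m x.
Definition resid_du n (A : 'M[C]_n) (l x : 'cV[C]_n) : 'cV[C]_n :=
  - l - adjmx A *m x.
End Defs.

(* Main.v *)
Require Import Defs.
From HB Require Import structures.
From mathcomp Require Import all_boot all_order all_algebra ring.
Set Implicit Arguments. Unset Strict Implicit. Unset Printing Implicit Defensive.
Import Order.TTheory GRing.Theory Num.Theory.
Local Open Scope ring_scope.
Section H.
Variable C : numClosedFieldType.
Variable realK : bool.
Implicit Types (c d : C).
Lemma inK_real c : c \is Num.real -> inK realK c.
Proof. by rewrite /inK => ->; rewrite implybT. Qed.
Lemma inKD c d : inK realK c -> inK realK d -> inK realK (c + d).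
Proof. by rewrite /inK; case: realK => //= ??; apply: rpredD. Qed.
Lemma inKN c : inK realK c -> inK realK (- c).
Proof. by rewrite /inK; case: realK => //= ?; by rewrite realN. Qed.
Lemma inKM c d : inK realK c -> inK realK d -> inK realK (c * d).
Proof. by rewrite /inK; case: realK => //= ??; apply: rpredM. Qed.
Lemma inKV c : inK realK c -> inK realK (c^-1).
Proof. by rewrite /inK; case: realK => //= ?; by rewrite realV. Qed.
Lemma inK0 : inK realK (0 : C). Proof. exact: inK_real. Qed.
Lemma inK1 : inK realK (1 : C). Proof. exact: inK_real. Qed.
Lemma inKX c m : inK realK c -> inK realK (c ^+ m).
Proof. by rewrite /inK; case: realK => //= ?; apply: rpredX. Qed.
Lemma inK_conj c : inK realK c -> inK realK (c^*).
Proof. by rewrite /inK; case: realK => //= Hc; rewrite conj_Creal. Qed.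
Lemma inK_sum (I : Type) (r : seq I) (P : pred I) (F : I -> C) :
  (forall i, P i -> inK realK (F i)) -> inK realK (\sum_(i <- r | P i) F i).
Proof. move=> H; apply: (big_ind (inK realK)) => //; [exact: inK0|exact: inKD]. Qed.
Lemma inK_prod (I : Type) (r : seq I) (P : pred I) (F : I -> C) :
  (forall i, P i -> inK realK (F i)) -> inK realK (\prod_(i <- r | P i) F i).
Proof. move=> H; apply: (big_ind (inK realK)) => //; [exact: inK1|exact: inKM]. Qed.

Lemma mxInKD m p (M N : 'M[C]_(m,p)) : mxInK realK M -> mxInK realK N -> mxInK realK (M + N).
Proof. by move=> HM HN i j; rewrite mxE; apply: inKD. Qed.
Lemma mxInKN m p (M : 'M[C]_(m,p)) : mxInK realK M -> mxInK realK (- M).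
Proof. by move=> HM i j; rewrite mxE; apply: inKN. Qed.
Lemma mxInKB m p (M N : 'M[C]_(m,p)) : mxInK realK M -> mxInK realK N -> mxInK realK (M - N).
Proof. by move=> HM HN; apply: mxInKD => //; apply: mxInKN. Qed.
Lemma mxInKM m p q (M : 'M[C]_(m,p)) (N : 'M[C]_(p,q)) : mxInK realK M -> mxInK realK N -> mxInK realK (M *m N).
Proof. by move=> HM HN i j; rewrite mxE; apply: inK_sum => k _; apply: inKM. Qed.
Lemma mxInKZ m p c (M : 'M[C]_(m,p)) : inK realK c -> mxInK realK M -> mxInK realK (c *: M).
Proof. by move=> Hc HM i j; rewrite mxE; apply: inKM. Qed.
Lemma mxInK_adj m p (M : 'M[C]_(m,p)) : mxInK realK M -> mxInK realK (adjmx M).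
Proof. by move=> HM i j; rewrite !mxE; apply: inK_conj. Qed.
Lemma det_inK m (M : 'M[C]_m) : mxInK realK M -> inK realK (\det M).
Proof.
move=> HM; rewrite /determinant; apply: inK_sum => s _; apply: inKM.
  by apply: inKX; apply: inKN; apply: inK1.
by apply: inK_prod => i _.
Qed.
Lemma mxInK_inv m (M : 'M[C]_m) : mxInK realK M -> mxInK realK (invmx M).
Proof.
move=> HM; rewrite /invmx; case: ifP => _ //; apply: mxInKZ.
  by apply: inKV; apply: det_inK.
move=> i j; rewrite mxE /cofactor; apply: inKM.
  by apply: inKX; apply: inKN; apply: inK1.
by apply: det_inK => a b; rewrite !mxE.
Qed.
Lemma dotpE n (x y : 'cV[C]_n) : dotp x y = (adjmx x *m y) 0 0.
Proof. by rewrite mxE; apply: eq_bigr => i _; rewrite !mxE. Qed.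
Lemma adjmx_mul m p q (A : 'M[C]_(m,p)) (B : 'M[C]_(p,q)) :
  adjmx (A *m B) = adjmx B *m adjmx A.
Proof. by rewrite /adjmx trmx_mul map_mxM. Qed.
Lemma dotp_adj n m (M : 'M[C]_(m,n)) (x : 'cV[C]_n) (y : 'cV[C]_m) : dotp (M *m x) y = dotp x (adjmx M *m y).
Proof. by rewrite !dotpE adjmx_mul mulmxA. Qed.
Lemma dotp_conj n (x y : 'cV[C]_n) : dotp y x = (dotp x y)^*.
Proof. by rewrite /dotp rmorph_sum; apply: eq_bigr => i _; rewrite rmorphM /= conjCK mulrC. Qed.
Lemma dotpDr n (x y z : 'cV[C]_n) : dotp x (y + z) = dotp x y + dotp x z.
Proof. by rewrite /dotp -big_split; apply: eq_bigr => i _; rewrite mxE mulrDr. Qed.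
Lemma dotpZr n c (x y : 'cV[C]_n) : dotp x (c *: y) = c * dotp x y.
Proof. by rewrite /dotp mulr_sumr; apply: eq_bigr => i _; rewrite mxE mulrCA. Qed.
Lemma dotpDl n (x y z : 'cV[C]_n) : dotp (y + z) x = dotp y x + dotp z x.
Proof. by rewrite /dotp -big_split; apply: eq_bigr => i _; rewrite mxE rmorphD mulrDl. Qed.
Lemma dotpZl n c (x y : 'cV[C]_n) : dotp (c *: y) x = c^* * dotp y x.
Proof. by rewrite /dotp mulr_sumr; apply: eq_bigr => i _; rewrite mxE rmorphM mulrA. Qed.
Lemma dotpNr n (x y : 'cV[C]_n) : dotp x (- y) = - dotp x y.
Proof. by rewrite -scaleN1r dotpZr mulN1r. Qed.
Lemma dotpNl n (x y : 'cV[C]_n) : dotp (- y) x = - dotp y x.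
Proof. by rewrite -scaleN1r dotpZl rmorphN1 mulN1r. Qed.
Lemma dotp0l n (x : 'cV[C]_n) : dotp 0 x = 0.
Proof. by rewrite /dotp big1 // => i _; rewrite mxE rmorph0 mul0r. Qed.
Lemma dotp_inK n (x y : 'cV[C]_n) : mxInK realK x -> mxInK realK y -> inK realK (dotp x y).
Proof. by move=> Hx Hy; apply: inK_sum => i _; apply: inKM => //; apply: inK_conj. Qed.
End H.
Section H2.
Variable C : numClosedFieldType.
Lemma adjmxK m p (M : 'M[C]_(m,p)) : adjmx (adjmx M) = M.
Proof. by apply/matrixP => i j; rewrite !mxE conjCK. Qed.
Lemma adjmx0 m p : adjmx (0 : 'M[C]_(m,p)) = 0.
Proof. by apply/matrixP => i j; rewrite !mxE rmorph0. Qed.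

Lemma posdef_ker realK n (RU : 'M[C]_n) (w : 'cV[C]_n) : posdef realK RU -> mxInK realK w -> RU *m w = 0 -> w = 0.
Proof.
move=> hpd hw hR; apply/eqP; apply/negPn/negP => w0.
by have := hpd w hw w0; rewrite hR dotp0l ltxx.
Qed.

Lemma R_unit realK n (RU : 'M[C]_n) : mxInK realK RU -> selfadjoint RU -> posdef realK RU ->
  RU \in unitmx.
Proof.
move=> hr hsa hpd; apply/negPn/negP => nu.
have : \det RU == 0 by move: nu; rewrite unitmxE unitfE negbK.
case/det0P => v v0 vR.
pose x := adjmx v.
have Rx : RU *m x = 0 by rewrite /x -{1}hsa -adjmx_mul vR adjmx0.
have x0 : x != 0 by apply: contraNneq v0 => h; rewrite -(adjmxK v) -/x h adjmx0.
case E: realK in hr hpd.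
  pose xc := map_mx (@Num.conj C) x.
  have hRc : map_mx (@Num.conj C) RU = RU.
    by apply/matrixP => i j; rewrite mxE conj_Creal //; have := hr i j.
  have Rxc : RU *m xc = 0 by rewrite /xc -{1}hRc -map_mxM Rx map_mx0.
  have ha : mxInK true (x + xc).
    by move=> i j; rewrite /inK /= !mxE CrealE rmorphD /= conjCK addrC.
  have hb : mxInK true ('i *: (x - xc)).
    move=> i j; rewrite /inK /= !mxE CrealE rmorphM rmorphB /= conjCi conjCK.
    by rewrite mulNr -mulrN opprB.
  have a0 : x + xc = 0 by apply: (posdef_ker hpd ha); rewrite mulmxDr Rx Rxc addr0.
  have b0 : 'i *: (x - xc) = 0 by apply: (posdef_ker hpd hb); rewrite -scalemxAr mulmxBr Rx Rxc subrr scaler0.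
  have : 2%:R *: x = (x + xc) - 'i *: ('i *: (x - xc)).
    by rewrite scalerA -expr2 sqrCi scaleN1r opprK addrACA subrr addr0 scaler_nat mulr2n.
  rewrite a0 b0 scaler0 subrr => /eqP; rewrite scaler_eq0 pnatr_eq0 /=.
  by move/negPf: x0 => ->.
have := hpd x (fun i j => erefl true) x0.
by rewrite Rx dotp0l ltxx.
Qed.
End H2.
Section H3.
Variable C : numClosedFieldType.
Lemma dotp0r n (x : 'cV[C]_n) : dotp x 0 = 0.
Proof. by rewrite /dotp big1 // => i _; rewrite mxE mulr0. Qed.

Lemma dotU_ge0 realK n (RU : 'M[C]_n) x : posdef realK RU -> mxInK realK x -> 0 <= dotU RU x x.
Proof.
move=> hpd hx; have [->|x0] := eqVneq x 0; first by rewrite /dotU mulmx0 dotp0l.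
exact: ltW (hpd x hx x0).
Qed.

Lemma dotU_herm n (RU : 'M[C]_n) x y : selfadjoint RU -> dotU RU y x = (dotU RU x y)^*.
Proof. by move=> hsa; rewrite /dotU dotp_adj hsa dotp_conj. Qed.

Lemma dotU_expand n (RU : 'M[C]_n) a b x y :
  dotU RU (a *: x + b *: y) (a *: x + b *: y) =
  a^* * a * dotU RU x x + a^* * b * dotU RU x y + b^* * a * dotU RU y x + b^* * b * dotU RU y y.
Proof.
rewrite /dotU mulmxDr -!scalemxAr dotpDl !dotpZl !dotpDr !dotpZr; ring.
Qed.

Lemma CS2 realK n (RU : 'M[C]_n) x y : mxInK realK RU -> selfadjoint RU -> posdef realK RU ->
  mxInK realK x -> mxInK realK y ->
  `|dotU RU x y| ^+ 2 <= dotU RU x x * dotU RU y y.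
Proof.
move=> hr hsa hpd hx hy.
have xx0 := dotU_ge0 hpd hx; have yy0 := dotU_ge0 hpd hy.
have [y0|y0] := eqVneq y 0.
  have -> : dotU RU x y = 0 by rewrite y0 /dotU dotp0r.
  by rewrite normr0 expr0n /= mulr_ge0.
have yy : 0 < dotU RU y y := hpd y hy y0.
pose w := dotU RU y y *: x + (- dotU RU y x) *: y.
have hw : mxInK realK w.
  apply: mxInKD; apply: mxInKZ => //; first by apply: dotp_inK => //; apply: mxInKM.
  by apply: inKN; apply: dotp_inK => //; apply: mxInKM.
have := dotU_ge0 hpd hw; rewrite /w dotU_expand.
rewrite [dotU RU y x]dotU_herm // rmorphN /= conjCK (conj_Creal (ger0_real (ltW yy))).
set p := dotU RU x y; set q := dotU RU y y; set r := dotU RU x x.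
have -> : q * q * r + q * - p^* * p + - p * q * p^* + - p * - p^* * q
   = q * (q * r - p * p^*) by ring.
rewrite pmulr_rge0 // subr_ge0 -normCK mulrC //.
Qed.

Lemma CS realK n (RU : 'M[C]_n) x y : mxInK realK RU -> selfadjoint RU -> posdef realK RU ->
  mxInK realK x -> mxInK realK y ->
  `|dotU RU x y| <= normU RU x * normU RU y.
Proof.
move=> hr hsa hpd hx hy.
have xx0 := dotU_ge0 hpd hx; have yy0 := dotU_ge0 hpd hy.
rewrite /normU -sqrtCM ?nnegrE // -[X in X <= _](sqrCK (normr_ge0 _)).
by rewrite ler_sqrtC ?nnegrE ?exprn_ge0 ?mulr_ge0 // (CS2 hr).
Qed.
Lemma normU_ge0 realK n (RU : 'M[C]_n) x : posdef realK RU -> mxInK realK x -> 0 <= normU RU x.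
Proof. by move=> hpd hx; rewrite sqrtC_ge0 (dotU_ge0 hpd hx). Qed.
Lemma normU0 n (RU : 'M[C]_n) : normU RU 0 = 0.
Proof. by rewrite /normU /dotU mulmx0 dotp0l sqrtC0. Qed.
Lemma normUd_eq n (RU : 'M[C]_n) y : RU \in unitmx -> normUd RU y = normU RU (invmx RU *m y).
Proof. by move=> hu; rewrite /normUd /normU /dotU mulKVmx. Qed.
Lemma normUd_R n (RU : 'M[C]_n) w : RU \in unitmx -> normUd RU (RU *m w) = normU RU w.
Proof. by move=> hu; rewrite /normUd /normU /dotU mulKmx. Qed.

Lemma GCS realK n (RU : 'M[C]_n) y z : mxInK realK RU -> selfadjoint RU -> posdef realK RU ->
  mxInK realK y -> mxInK realK z ->
  `|dotp y z| <= normUd RU y * normU RU z.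
Proof.
move=> hr hsa hpd hy hz; have hu := R_unit hr hsa hpd.
have hx : mxInK realK (invmx RU *m y) by apply: mxInKM => //; apply: mxInK_inv.
rewrite normUd_eq //.
have -> : dotp y z = dotU RU (invmx RU *m y) z by rewrite /dotU mulKVmx.
exact: CS.
Qed.
Lemma normUd_ge0 realK n (RU : 'M[C]_n) y : mxInK realK RU -> selfadjoint RU -> posdef realK RU ->
  mxInK realK y -> 0 <= normUd RU y.
Proof.
move=> hr hsa hpd hy; have hu := R_unit hr hsa hpd.
rewrite normUd_eq //; apply: normU_ge0 hpd _.
by apply: mxInKM => //; apply: mxInK_inv.
Qed.
End H3.

Unset Implicit Arguments.
Theorem proposition4p6 (C : numClosedFieldType) (realK : bool) (n k : nat)
    (RU : 'M[C]_n) (A : 'M[C]_n) (b l ur udu : 'cV[C]_n)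
    (Theta : 'M[C]_(k, n)) (eta eps : C) :
  mxInK realK RU -> selfadjoint RU -> posdef realK RU ->
  mxInK realK A -> A \in unitmx ->
  mxInK realK b -> mxInK realK l -> mxInK realK ur -> mxInK realK udu ->
  mxInK realK Theta ->
  0 < eta ->
  (forall x : 'cV[C]_n, mxInK realK x -> x != 0 ->
     eta <= normUd RU (A *m x) / normU RU x) ->
  0 <= eps -> eps < 1 ->
  (forall x y : 'cV[C]_n,
     inspan2 realK udu (invmx RU *m resid A b ur) x ->
     inspan2 realK udu (invmx RU *m resid A b ur) y ->
     `| dotU RU x y - dotp (Theta *m x) (Theta *m y) |
       <= eps * normU RU x * normU RU y) ->
  let u := invmx A *m b in
  let s := dotp l u in
  let sr := dotp l ur in
  let srspd := sr - dotp (Theta *m udu) (Theta *m (invmx RU *m resid A b ur)) in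
  `| s - srspd |
    <= normUd RU (resid A b ur) / eta *
       ((1 + eps) * normUd RU (resid_du A l udu) + eps * normUd RU l).
Proof.
move=> hr hsa hpd hA hAu hb hl hur hudu hT heta hinf he0 he1 hspan /=.
have hu := R_unit hr hsa hpd.
set r := resid A b ur; set rdu := resid_du A l udu.
set w := invmx RU *m r.
set e := invmx A *m b - ur.
have hrr : mxInK realK r by apply: mxInKB => //; apply: mxInKM.
have hrdu : mxInK realK rdu.
  by apply: mxInKB; [apply: mxInKN|apply: mxInKM => //; apply: mxInK_adj].
have hw : mxInK realK w by apply: mxInKM => //; apply: mxInK_inv.
have he : mxInK realK e by apply: mxInKB => //; apply: mxInKM => //; apply: mxInK_inv.
have hAe : A *m e = r by rewrite /e mulmxBr mulKVmx.
have Binf : forall x, mxInK realK x -> normU RU x * eta <= normUd RU (A *m x).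
  move=> x hx; have [->|x0] := eqVneq x 0.
    rewrite normU0 mul0r; apply: (normUd_ge0 hr hsa hpd).
    by rewrite mulmx0 => i j; rewrite mxE; exact: inK0.
  have hxp : 0 < normU RU x by rewrite sqrtC_gt0; apply: hpd.
  by rewrite mulrC -ler_pdivlMr //; apply: hinf.
have hl' : l = - rdu - adjmx A *m udu.
  by rewrite /rdu /resid_du opprB opprK addrAC subrr add0r.
have h1 : dotp l (invmx A *m b) = dotp l e + dotp l ur by rewrite -dotpDr /e subrK.
have h3 : forall v, dotp udu (RU *m v) = dotU RU udu v.
  by move=> v; rewrite /dotU -{1}hsa -dotp_adj.
have h2 : dotp l e = - dotp rdu e - dotU RU udu w.
  rewrite {1}hl' dotpDl !dotpNl dotp_adj adjmxK hAe -h3 /w mulKVmx //.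
rewrite h1 h2.
set T := dotp (Theta *m udu) (Theta *m w).
set D := dotU RU udu w - T.
have -> : - dotp rdu e - dotU RU udu w + dotp l ur - (dotp l ur - T) = - dotp rdu e - D.
  by rewrite /D; ring.
apply: le_trans (ler_normB _ _) _; rewrite normrN.
have B1 : `|dotp rdu e| <= normUd RU rdu * normU RU e by apply: GCS.
have B2 : normU RU e <= normUd RU r / eta by rewrite ler_pdivlMr // -hAe; apply: Binf.
have B3 : `|D| <= eps * normU RU udu * normUd RU r.
  rewrite normUd_eq //; apply: hspan.
    by exists 1, 0; split; [exact: inK1|exact: inK0|rewrite scale1r scale0r addr0].
  by exists 0, 1; split; [exact: inK0|exact: inK1|rewrite scale1r scale0r add0r].
have B4 : normU RU udu <= (normUd RU rdu + normUd RU l) / eta.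
  rewrite ler_pdivlMr //.
  have [u0|u0] := eqVneq udu 0.
    rewrite u0 normU0 mul0r addr_ge0 //; exact: (normUd_ge0 hr hsa hpd).
  have hup : 0 < normU RU udu by rewrite sqrtC_gt0; apply: hpd.
  set z := invmx A *m (RU *m udu).
  have hz : mxInK realK z by apply: mxInKM; [apply: mxInK_inv|apply: mxInKM].
  have hAz : A *m z = RU *m udu by rewrite /z mulKVmx.
  have Bz : normU RU z * eta <= normU RU udu.
    by rewrite -(normUd_R udu hu) -hAz; apply: Binf.
  have hadj : adjmx A *m udu = - rdu - l.
    by rewrite /rdu /resid_du opprB opprK addrK.
  have hsq : normU RU udu ^+ 2 = dotp (adjmx A *m udu) z.
    by rewrite /normU sqrtCK dotp_adj adjmxK hAz h3.
  have hSge0 : 0 <= normUd RU rdu + normUd RU l.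
    by rewrite addr_ge0 //; exact: (normUd_ge0 hr hsa hpd).
  have S : normU RU udu ^+ 2 <= (normUd RU rdu + normUd RU l) * normU RU z.
    rewrite -[X in X <= _]ger0_norm ?exprn_ge0 ?(normU_ge0 hpd) //.
    rewrite hsq hadj dotpDl !dotpNl; apply: le_trans (ler_normD _ _) _.
    by rewrite !normrN mulrDl lerD //; apply: GCS.
  rewrite -(ler_pM2r hup).
  apply: le_trans (_ : (normUd RU rdu + normUd RU l) * normU RU z * eta <= _).
    by rewrite mulrAC -expr2 ler_pM2r.
  rewrite -mulrA; apply: (ler_wpM2l hSge0); exact: Bz.
apply: le_trans (lerD B1 B3) _.
have hnr := normUd_ge0 hr hsa hpd hrr.
apply: le_trans (_ : normUd RU rdu * (normUd RU r / eta) +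
   eps * ((normUd RU rdu + normUd RU l) / eta) * normUd RU r <= _).
  apply: lerD; first by apply: ler_wpM2l => //; exact: (normUd_ge0 hr hsa hpd).
  by apply: ler_wpM2r => //; apply: ler_wpM2l.
by rewrite le_eqVlt; apply/orP; left; apply/eqP; ring.
Qed.
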